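(* Let $G=(V,E)$ be an $n$-node graph, let $e \ge 1$ be an integer, and let $\mathcal{C}$ be the output of $\mathbf{cluster}(G, e)$. Then there are at most $ne$ edges in $G$ with both endpoints unclustered in $\mathcal{C}$.
   Context: $G$ is an unweighted undirected graph. The procedure $\mathbf{cluster}(G,e)$ is: initialize $\mathcal{C} = \emptyset$ and unmark all nodes; while there is an unmarked node $u$ with at least $e-1$ unmarked neighbors, let $C$ be the set consisting of $u$ together with any $e-1$ of its unmarked neighbors, mark all nodes of $C$, and add $C$ to $\mathcal{C}$; finally return $\mathcal{C}$. Each $C \in \mathcal{C}$ is called a cluster; a node is clustered if it belongs to some cluster in $\mathcal{C}$ and unclustered otherwise. *)

(* Defs.v *)
From mathcomp Require Import all_boot.
Set Implicit Arguments. Unset Strict Implicit. Unset Printing Implicit Defensive.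

(* A graph on vertex type T is given by an adjacency relation adj : rel T;
   it is an (undirected, simple) graph when adj is symmetric and irreflexive. *)

Section Cluster.
Variables (T : finType) (adj : rel T) (e : nat).

Definition unmarked_nbrs (M : {set T}) (u : T) : {set T} :=
  [set v | adj u v & v \notin M].

Definition cluster_step (M : {set T}) (C : {set T}) : Prop :=
  exists u : T, exists S : {set T},
    [/\ u \notin M, S \subset unmarked_nbrs M u, #|S| = e.-1 & C = u |: S].

(* the while-loop guard is false: no unmarked node has >= e-1 unmarked nbrs *)
Definition cluster_stop (M : {set T}) : Prop :=
  forall u : T, u \notin M -> #|unmarked_nbrs M u| < e.-1.

(* cs (in order of creation) is a possible run of the loop starting with
   marked set M and ending when the guard fails. *)
Fixpoint cluster_run (M : {set T}) (cs : seq {set T}) : Prop :=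
  match cs with
  | [::] => cluster_stop M
  | C :: cs' => cluster_step M C /\ cluster_run (M :|: C) cs'
  end.

Definition is_cluster_output (cs : seq {set T}) : Prop := cluster_run set0 cs.

Definition clustered (cs : seq {set T}) (x : T) : bool :=
  has (fun C : {set T} => x \in C) cs.

Definition edges : {set {set T}} :=
  [set E : {set T} | [exists x, exists y, adj x y && (E == [set x; y])]].

Definition unclustered_edges (cs : seq {set T}) : {set {set T}} :=
  [set E in edges | [forall x in E, ~~ clustered cs x]].

End Cluster.

(* Main.v *)
Require Import Defs.
From mathcomp Require Import all_boot.

Lemma run_final (T : finType) (adj : rel T) (e : nat) (cs : seq {set T}) (M : {set T}) :
  cluster_run adj e M cs ->
  exists M' : {set T}, cluster_stop adj e M' /\
    forall x, (x \in M') = (x \in M) || clustered cs x.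
Proof.
elim: cs M => [|C cs IH] M /=.
  by move=> H; exists M; split => // x; rewrite /clustered /= orbF.
case=> _ /IH [M' [HS HM]]; exists M'; split => // x.
by rewrite HM in_setU /clustered /= orbA.
Qed.

Theorem claim1 (T : finType) (adj : rel T) (e : nat) (cs : seq {set T}) :
  symmetric adj -> irreflexive adj -> 1 <= e ->
  is_cluster_output adj e cs ->
  #|unclustered_edges adj cs| <= #|T| * e.
Proof.
move=> sym irr e1 /run_final [M [HS HM]].
have HM0 : forall x, (x \in M) = clustered cs x by move=> x; rewrite HM in_set0.
pose P := [set p : T * T | (p.1 \notin M) && (p.2 \in unmarked_nbrs adj M p.1)].
have sub : unclustered_edges adj cs \subset (fun p : T * T => [set p.1; p.2]) @: P.
  apply/subsetP => E; rewrite !inE => /andP [/existsP [x /existsP [y /andP [axy /eqP ->]]]].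
  move=> /forallP H.
  have hx := H x; have hy := H y; rewrite !inE eqxx ?orbT /= in hx hy.
  have hy' : ~~ clustered cs y by move: hy; rewrite eqxx orbT.
  apply/imsetP; exists (x, y) => //.
  by rewrite !inE /= HM0 hx axy HM0 hy'.
apply: leq_trans (subset_leq_card sub) _.
apply: leq_trans (leq_imset_card _ _) _.
have -> : #|P| = \sum_(u : T) #|[set v | (u, v) \in P]|.
  rewrite -sum1_card (eq_bigl (fun p : T * T => (p.1, p.2) \in P)); last by case.
  rewrite -(pair_big_dep xpredT (fun u v => (u, v) \in P) (fun _ _ => 1)) /=.
  by apply: eq_bigr => u _; rewrite sum1_card cardsE.
apply: leq_trans (_ : \sum_(u : T) e.-1 <= _).
  apply: leq_sum => u _.
  case: (boolP (u \in M)) => uM.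
    rewrite (_ : [set v | (u, v) \in P] = set0) ?cards0 //.
    by apply/setP => v; rewrite !inE /= uM.
  rewrite (_ : [set v | (u, v) \in P] = unmarked_nbrs adj M u).
    by apply: ltnW; apply: HS.
  by apply/setP => v; rewrite !inE /= uM.
rewrite sum_nat_const; apply: leq_mul => //; exact: leq_pred.
Qed.
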